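(* Let $S$ be a numerical semigroup. Then the set of minimal elements of $(\mathrm{Betti}(S),\le_S)$ equals the set of minimal elements of $(\mathcal E(S),\le_S)$. Moreover, for every minimal element $\alpha$ of $(\mathcal E(S),\le_S)$ one has $e_\alpha=\mathfrak d(\alpha)-1=\mathrm i(\alpha)-1$.
   Context: A numerical semigroup $S$ is a submonoid of $(\mathbb N,+)$ with finite complement, with minimal generating set $A=\{n_1,\dots,n_e\}$. The cyclotomic exponent sequence is the unique integer sequence $(e_j)_{j\ge1}$ with $(1-x)\sum_{s\in S}x^s=\prod_{j\ge1}(1-x^j)^{e_j}$ in $\mathbb Z[[x]]$; $\mathcal E(S)=\{d\in\mathbb N: d\ge2,\ e_d\ne0,\ d\notin A\}$. Write $a\le_S b$ if $b-a\in S$. Let $\varphi:\mathbb N^e\to S$, $\varphi(a)=\sum_ia_in_i$; $\mathrm Z(s)=\varphi^{-1}(s)$ and $\mathfrak d(s)=|\mathrm Z(s)|$. $\nabla_s$ is the graph on $\mathrm Z(s)$ with distinct $x,y$ adjacent iff $x\cdot y\ne0$; $s$ is a Betti element if $\nabla_s$ is disconnected, $\mathrm{Betti}(S)$ is the set of Betti elements. A factorization $z\in\mathrm Z(s)$ is isolated if $z\cdot x=0$ for all $x\in\mathrm Z(s)\setminus\{z\}$; $\mathrm i(s)$ is the number of isolated factorizations of $s$. *)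

(* Defs.v *)
From HB Require Import structures.
From mathcomp Require Import all_boot all_order all_algebra.
Set Implicit Arguments. Unset Strict Implicit. Unset Printing Implicit Defensive.
Import Order.TTheory GRing.Theory Num.Theory.

(* A numerical semigroup S is given through its minimal generating set
   A = [:: n_1; ...; n_e] (listed in some order); S = <n_1,...,n_e>. *)

Section NumSemigroup.
Variable A : seq nat.
Local Notation e := (size A).
Local Notation n i := (nth 0%N A i).

Definition phi (a : 'I_e -> nat) : nat := (\sum_(i < e) a i * n i)%N.

(* A is a minimal generating set: no generator n_i is an N-combination of the
   other generators (this also forces n_i > 0 and the n_i pairwise distinct). *)
Definition min_gens : Prop :=
  forall i : 'I_e, ~ exists a : 'I_e -> nat, a i = 0%N /\ phi a = n i.

Definition cofinite_gen : Prop :=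
  exists N : nat, forall s, (N <= s)%N -> exists a : 'I_e -> nat, phi a = s.

Definition numerical_semigroup_mingens : Prop := min_gens /\ cofinite_gen.

(* Since all generators are >= 1, every coordinate of a
   factorization of s is <= s, so Z(s) is faithfully represented inside the
   finite type of vectors with coordinates in 'I_(s+1). *)
Definition fact_vec (s : nat) := {ffun 'I_e -> 'I_s.+1}.
Definition phiv (s : nat) (a : fact_vec s) : nat := (\sum_(i < e) a i * n i)%N.

Definition Z (s : nat) : {set fact_vec s} := [set a | phiv a == s].

Definition inS (s : nat) : bool := Z s != set0.

Definition leS (a b : nat) : bool := (a <= b)%N && inS (b - a).

Definition dnum (s : nat) : nat := #|Z s|.

Definition dotv (s : nat) (x y : fact_vec s) : nat :=
  (\sum_(i < e) (x i : nat) * (y i : nat))%N.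

Definition nabla_rel (s : nat) : rel (fact_vec s) :=
  fun x y => [&& x \in Z s, y \in Z s, x != y & dotv x y != 0%N].

Definition Betti (s : nat) : Prop :=
  exists x y : fact_vec s,
    [/\ x \in Z s, y \in Z s & ~~ connect (@nabla_rel s) x y].

Definition isolated (s : nat) (z : fact_vec s) : bool :=
  (z \in Z s) && [forall x, ((x \in Z s) && (x != z)) ==> (dotv z x == 0%N)].

Definition inum (s : nat) : nat := #|[set z : fact_vec s | isolated z]|.

Definition hilb_trunc (m : nat) : {poly int} :=
  (\sum_(0 <= s < m.+1 | inS s) 'X^s)%R.

(* (e_j)_{j>=1} is the cyclotomic exponent sequence of S:
   (1 - x) * sum_{s in S} x^s = prod_{j>=1} (1 - x^j)^{e_j}  in Z[[x]].
   Since each (1 - x^j) is a unit of Z[[x]] and (1-x^j)^{e_j} = 1 mod x^j,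
   this is equivalent to: for every m, after moving the factors with negative
   exponent to the left, both sides agree modulo x^{m+1} (the factors with
   j > m being = 1 mod x^{m+1}).  The value e 0 is irrelevant. *)
Definition cyclotomic_exponents (ex : nat -> int) : Prop :=
  forall m k : nat, (k <= m)%N ->
    (((1 - 'X) * hilb_trunc m *
        \prod_(1 <= j < m.+1 | ex j < 0) (1 - 'X^j) ^+ `|ex j|%N) `_ k)%R =
    ((\prod_(1 <= j < m.+1 | 0 < ex j) (1 - 'X^j) ^+ `|ex j|%N) `_ k)%R.

Definition Eset (ex : nat -> int) (d : nat) : Prop :=
  (2 <= d)%N /\ ex d <> 0%R /\ d \notin A.

Definition minimalS (P : nat -> Prop) (x : nat) : Prop :=
  P x /\ forall y, P y -> leS y x -> y = x.

End NumSemigroup.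

(* Main.v *)
Require Import Defs.
From HB Require Import structures.
From mathcomp Require Import all_boot all_order all_algebra.
From mathcomp Require Import zify ring.
From Stdlib Require Import Classical.
Import Order.TTheory GRing.Theory Num.Theory.
Set Implicit Arguments. Unset Strict Implicit. Unset Printing Implicit Defensive.

Section Comb.
Variable A : seq nat.
Hypothesis hmin : min_gens A.
Local Notation e := (size A).
Local Notation n i := (nth 0%N A i).

Lemma gens_pos (i : 'I_e) : 0 < n i.
Proof.
rewrite lt0n; apply/negP => /eqP h; apply: (hmin (i := i)).
exists (fun _ => 0); split => //; rewrite /phi big1 ?h //.
Qed.

Lemma term_le (f : 'I_e -> nat) (i : 'I_e) : f i <= \sum_(k < e) f k * n k.
Proof.
rewrite (bigD1 i) //=; apply: leq_trans (leq_addr _ _).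
by rewrite leq_pmulr ?gens_pos.
Qed.

Lemma exZ (t : nat) (f : 'I_e -> nat) : \sum_(k < e) f k * n k = t ->
  exists2 v : fact_vec A t, v \in Z A t & forall k, (v k : nat) = f k.
Proof.
move=> hs.
have hb k : f k <= t by rewrite -hs term_le.
exists [ffun k => inord (f k)].
  rewrite inE /phiv; apply/eqP; apply: eq_trans hs; apply: eq_bigr => k _.
  by rewrite ffunE inordK // ltnS.
by move=> k; rewrite ffunE inordK // ltnS.
Qed.

Lemma ZP (t : nat) (v : fact_vec A t) : (v \in Z A t) = (\sum_(k < e) v k * n k == t).
Proof. by rewrite inE. Qed.

Lemma inSP t : reflect (exists2 v, v \in Z A t & True) (inS A t).
Proof.
apply: (iffP (set0Pn _)) => [[v hv]|[v hv _]]; by exists v.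
Qed.

Lemma inS_fun t : inS A t <-> exists f : 'I_e -> nat, \sum_(k < e) f k * n k = t.
Proof.
split => [/inSP [v hv _]|[f hf]].
  by exists (fun k => nat_of_ord (v k)); move: hv; rewrite ZP => /eqP.
by have [v hv _] := exZ hf; apply/inSP; exists v.
Qed.

Lemma inS0 : inS A 0.
Proof. by apply/inS_fun; exists (fun _ => 0); rewrite big1. Qed.

Lemma sum_delta (i : 'I_e) : \sum_(k < e) (k == i) * n k = n i.
Proof.
rewrite (bigD1 i) //= eqxx mul1n big1 ?addn0 // => k /negbTE ->; by rewrite mul0n.
Qed.

Lemma inS_gen (i : 'I_e) : inS A (n i).
Proof. by apply/inS_fun; exists (fun k => (k == i) : nat); rewrite sum_delta. Qed.

Lemma sum_add (f g : 'I_e -> nat) :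
  \sum_(k < e) (f k + g k) * n k = \sum_(k < e) f k * n k + \sum_(k < e) g k * n k.
Proof. by rewrite -big_split /=; apply: eq_bigr => k _; rewrite mulnDl. Qed.

Lemma inS_add s t : inS A s -> inS A t -> inS A (s + t).
Proof.
move=> /inS_fun [f hf] /inS_fun [g hg]; apply/inS_fun.
by exists (fun k => f k + g k); rewrite sum_add hf hg.
Qed.

Definition U s := 1 < dnum A s.

Lemma UP s : reflect (exists x y, [/\ x \in Z A s, y \in Z A s & x != y]) (U s).
Proof. exact: card_gt1P. Qed.

Lemma U_inS s : U s -> inS A s.
Proof. by move=> /UP [x [y [hx _ _]]]; apply/inSP; exists x. Qed.


Lemma neq_vec m (x y : {ffun 'I_e -> 'I_m}) : x != y -> exists k, (x k : nat) != y k.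
Proof.
move=> hxy; apply: NNPP => hn; move/negP: hxy; apply; apply/eqP/ffunP => k.
apply/val_inj/eqP; apply: NNPP => h; apply: hn; by exists k; apply/negP.
Qed.

Lemma U_add s t : U s -> inS A t -> U (s + t).
Proof.
move=> /UP [x [y [hx hy hxy]]] /inSP [z hz _]; apply/UP.
move: hx hy hz; rewrite !ZP => /eqP hx /eqP hy /eqP hz.
have sx : \sum_(k < e) (x k + z k) * n k = s + t by rewrite sum_add hx hz.
have sy : \sum_(k < e) (y k + z k) * n k = s + t by rewrite sum_add hy hz.
have [x' hx' ex'] := exZ sx; have [y' hy' ey'] := exZ sy.
exists x', y'; split => //; have [k hk] := neq_vec hxy.
apply/eqP => h; move: hk; rewrite -(eqn_add2r (z k)) -ex' -ey' h eqxx //.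
Qed.

Lemma U_UU s t : U s -> U t -> U (s + t).
Proof. by move=> hs ht; apply: U_add => //; apply: U_inS. Qed.

Lemma leS_refl s : inS A 0 -> leS A s s.
Proof. by rewrite /leS leqnn subnn. Qed.

Lemma leS_trans a b c : leS A a b -> leS A b c -> leS A a c.
Proof.
move=> /andP [hab sab] /andP [hbc sbc]; apply/andP; split; first exact: leq_trans hbc.
have -> : c - a = (c - b) + (b - a) by lia.
exact: inS_add.
Qed.

Lemma leS_anti a b : leS A a b -> leS A b a -> a = b.
Proof. by move=> /andP [h1 _] /andP [h2 _]; apply/eqP; rewrite eqn_leq h1 h2. Qed.

Lemma U_mul j c : U j -> 0 < c -> U (c * j).
Proof.
move=> hj; elim: c => // c IH _; case: c IH => [|c] IH; first by rewrite mul1n.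
by rewrite mulSn addnC; apply: U_add; [exact: IH | exact: U_inS].
Qed.

Lemma share (s : nat) (x y : fact_vec A s) (i : 'I_e) :
  x \in Z A s -> y \in Z A s -> x != y -> 0 < x i -> 0 < y i ->
  U (s - n i) /\ leS A (s - n i) s.
Proof.
move=> hx hy hxy xi yi.
have hle : n i <= s.
  move: hx; rewrite ZP => /eqP <-; rewrite (bigD1 i) //=.
  apply: leq_trans (leq_addr _ _); by rewrite leq_pmull.
split; last first.
  rewrite /leS leq_subr /=. have -> : s - (s - n i) = n i by lia. by apply: inS_gen.
have key (w : fact_vec A s) : w \in Z A s -> 0 < w i ->
    \sum_(k < e) (w k - (k == i)) * n k = s - n i.
  rewrite ZP => /eqP hw wi.
  suff : \sum_(k < e) (w k - (k == i)) * n k + n i = s by lia.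
  rewrite -(sum_delta i) -sum_add; apply: eq_trans hw; apply: eq_bigr => k _.
  rewrite subnK //; case: eqP => // ->; exact: wi.
have [x' hx' ex'] := exZ (key x hx xi); have [y' hy' ey'] := exZ (key y hy yi).
apply/UP; exists x', y'; split => //; have [k hk] := neq_vec hxy.
apply/eqP => h; move: hk; apply/negP; rewrite negbK.
have e1 := ex' k; have e2 := ey' k; rewrite h e2 in e1.
have dx : (k == i) <= x k by case: eqP => // ->.
have dy : (k == i) <= y k by case: eqP => // ->.
apply/eqP; move: dx dy e1; move: (nat_of_bool (k == i)) => d; lia.
Qed.
End Comb.
Section Betti.
Variable A : seq nat.
Hypothesis hmin : min_gens A.
Local Notation e := (size A).
Local Notation n i := (nth 0%N A i).
Local Notation UU := (fun s => U A s).

Lemma notU0 : ~~ U A 0.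
Proof.
apply/negP => /UP [x [y [_ _ /negP]]]; apply; apply/eqP/ffunP => k.
by apply/val_inj; case: (x k) => [[]] //; case: (y k) => [[]].
Qed.

Lemma no_share u (x y : fact_vec A u) : minimalS A UU u ->
  x \in Z A u -> y \in Z A u -> x != y -> dotv x y = 0.
Proof.
move=> [hu hm] hx hy hxy; apply: NNPP => hd.
have [k hk] : exists k, x k * y k != 0.
  apply: NNPP => hn; apply: hd; rewrite /dotv big1 // => k _.
  by apply/eqP; apply: NNPP => h; apply: hn; exists k; apply/negP.
move: hk; rewrite muln_eq0 negb_or -!lt0n => /andP [xk yk].
have [hU hle] := share hmin hx hy hxy xk yk.
have := hm _ hU hle; have := gens_pos hmin k => hp h.
have u0 : u = 0 by lia.
by move: hu; rewrite u0 (negbTE notU0).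
Qed.

Lemma minU_Betti u : minimalS A UU u -> Betti A u.
Proof.
move=> hmu; have [hu _] := hmu; have /UP [x [y [hx hy hxy]]] := hu.
exists x, y; split => //; apply/negP => /connectP [p hp hl].
case: p hp hl => [|x' p] /=; first by move=> _ h; move: hxy; rewrite h eqxx.
move=> /andP [hr _] _; move: hr; rewrite /nabla_rel => /and4P [_ hx' hne hd].
by move: hd; rewrite (no_share hmu hx hx') // eq_sym.
Qed.

Lemma Betti_U s : Betti A s -> U A s.
Proof.
move=> [x [y [hx hy hc]]]; apply/UP; exists x, y; split => //.
by apply: contraNneq hc => ->; apply: connect0.
Qed.

Lemma exists_min s : U A s -> exists u, minimalS A UU u /\ leS A u s.
Proof.
elim: s {-2}s (leqnn s) => [|N IH] s hs hU.
  have s0 : s = 0 by lia.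
  by move: hU; rewrite s0 (negbTE notU0).
have [hm|hn] := Classical_Prop.classic (forall y, U A y -> leS A y s -> y = s).
  exists s; split; first by split.
  by apply: leS_refl; apply: inS0.
have [y hy'] := not_all_ex_not _ _ hn.
have [hy hy2] := imply_to_and _ _ hy'.
have [hys hne] := imply_to_and _ _ hy2.
have hlt : y < s by move: hys => /andP [h _]; rewrite ltn_neqAle h andbT; apply/eqP.
have hyN : y <= N by lia.
have [u [hmu hle]] := IH y hyN hy.
by exists u; split => //; apply: leS_trans hys.
Qed.

Lemma minBetti_iff d : minimalS A (Betti A) d <-> minimalS A UU d.
Proof.
split.
  move=> [hb hm]; split; first exact: Betti_U.
  move=> y hy hyd; have [u [hmu hud]] := exists_min hy.
  have hu : u = d by apply: hm; [exact: minU_Betti | exact: leS_trans hyd].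
  by apply: (leS_anti hyd); rewrite -hu.
move=> hmd; split; first exact: minU_Betti.
by move=> y hy hyd; apply: hmd.2 => //; apply: Betti_U.
Qed.

Lemma minU_inum u : minimalS A UU u -> inum A u = dnum A u.
Proof.
move=> hmu; rewrite /inum /dnum; apply: eq_card => z; rewrite inE /isolated.
case hz: (z \in Z A u) => //=; apply/forallP => x; apply/implyP => /andP [hx hxz].
by rewrite (no_share hmu hz hx) // eq_sym.
Qed.
End Betti.
Section Gens.
Variable A : seq nat.
Hypothesis hmin : min_gens A.
Local Notation e := (size A).
Local Notation n i := (nth 0%N A i).

Lemma sub_delta (f : 'I_e -> nat) t (i : 'I_e) : \sum_(k < e) f k * n k = t -> 0 < f i ->
  \sum_(k < e) (f k - (k == i)) * n k = t - n i.
Proof.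
move=> hw wi.
suff : \sum_(k < e) (f k - (k == i)) * n k + n i = t by lia.
rewrite -(sum_delta i) -sum_add; apply: eq_trans hw; apply: eq_bigr => k _.
rewrite subnK //; case: eqP => // ->; exact: wi.
Qed.

Lemma gen_unique (i : 'I_e) (v : fact_vec A (n i)) : v \in Z A (n i) ->
  forall k, (v k : nat) = (k == i).
Proof.
rewrite ZP => /eqP hv.
have vi : 0 < v i.
  rewrite lt0n; apply/negP => /eqP h0; apply: (hmin (i := i)).
  by exists (fun k => nat_of_ord (v k)).
have := sub_delta hv vi; rewrite subnn => /eqP; rewrite sum_nat_eq0 => /forallP h k.
have := h k; rewrite implyTb muln_eq0 (negbTE (lt0n_neq0 (gens_pos hmin k))) orbF.
move=> /eqP h1; have : (k == i) <= v k by case: eqP => // ->.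
move: h1; move: (nat_of_bool (k == i)) => d; lia.
Qed.

Lemma notU_gen (i : 'I_e) : ~~ U A (n i).
Proof.
apply/negP => /UP [x [y [hx hy hxy]]]; have [k] := neq_vec hxy.
by rewrite (gen_unique hx) (gen_unique hy) eqxx.
Qed.

Lemma U_notin u : U A u -> u \notin A.
Proof.
move=> hu; apply/negP => hin; have hi : index u A < e by rewrite index_mem.
by move: (notU_gen (Ordinal hi)) => /=; rewrite nth_index // hu.
Qed.

Lemma U_ge2 u : U A u -> 1 < u.
Proof.
move=> hu; case: u hu => [|[|u]] hu //; first by move: hu; rewrite (negbTE (notU0 A)).
have /UP [x [_ [hx _ _]]] := hu.
have [k xk] : exists k, 0 < x k.
  apply: NNPP => hn; move: hx; rewrite ZP big1 // => k _.
  suff -> : (x k : nat) = 0 by [].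
  by apply/eqP; apply: NNPP => h; apply: hn; exists k; rewrite lt0n; apply/negP.
have : x k * n k <= 1.
  move: hx; rewrite ZP => /eqP hx; apply: leq_trans (eq_leq hx).
  by rewrite (bigD1 k) //= leq_addr.
have := gens_pos hmin k => hp hle.
have hk1 : n k = 1 by move: hle hp xk; move: (n k) (nat_of_ord (x k)) => a b; nia.
by move: (U_notin hu); rewrite -hk1 mem_nth.
Qed.
End Gens.
Section Poly.
Local Open Scope ring_scope.

Definition eqm (N : nat) (p q : {poly int}) := forall k, (k <= N)%N -> p`_k = q`_k.

Lemma eqmM N p q r : eqm N p q -> eqm N (p * r) (q * r).
Proof.
move=> h k hk; rewrite !coefM; apply: eq_bigr => i _; rewrite h //.
by apply: leq_trans hk; rewrite -ltnS.
Qed.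

Lemma eqmMl N p q r : eqm N p q -> eqm N (r * p) (r * q).
Proof. by move=> h; rewrite ![r * _]mulrC; apply: eqmM. Qed.

Lemma eqm_trans N p q r : eqm N p q -> eqm N q r -> eqm N p r.
Proof. by move=> h1 h2 k hk; rewrite h1 // h2. Qed.

Lemma eqm_sym N p q : eqm N p q -> eqm N q p.
Proof. by move=> h k hk; rewrite h. Qed.

Lemma eqmD N p q r : eqm N p q -> eqm N (p + r) (q + r).
Proof. by move=> h k hk; rewrite !coefD h. Qed.

Lemma eqm_big N (m : nat) : (N < m)%N -> eqm N (1 - 'X^m) 1.
Proof.
move=> hm k hk; rewrite coefB coefXn; have -> : (k == m) = false by apply/negbTE; lia.
by rewrite subr0.
Qed.

Lemma eqm_bigX N (m a : nat) : (N < m)%N -> eqm N ((1 - 'X^m) ^+ a) 1.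
Proof.
move=> hm; elim: a => [|a IH]; first by move=> k _; rewrite expr0.
rewrite exprS; apply: eqm_trans (eqmMl _ IH) _; rewrite mulr1; exact: eqm_big.
Qed.

Lemma coef0_fac (j a : nat) : (0 < j)%N -> ((1 - 'X^j) ^+ a : {poly int})`_0 = 1.
Proof.
move=> hj; rewrite -horner_coef0 horner_exp hornerD hornerN hornerXn hornerC expr0n.
by rewrite (negbTE (lt0n_neq0 hj)) subr0 expr1n.
Qed.

Lemma coef_fac_n (q : {poly int}) (j a : nat) : (0 < j)%N ->
  (q * (1 - 'X^j) ^+ a)`_j = q`_j - a%:R * q`_0.
Proof.
move=> hj; elim: a => [|a IH]; first by rewrite expr0 mulr1 mul0r subr0.
rewrite exprSr mulrA mulrBr mulr1 coefB coefMXn ltnn subnn IH coef0M coef0_fac //.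
by rewrite mulr1 mulrSr; ring.
Qed.

Lemma cancel_fac N (j : nat) p q : (0 < j)%N ->
  eqm N (p * (1 - 'X^j)) (q * (1 - 'X^j)) -> eqm N p q.
Proof.
move=> hj h k; elim: k {-2}k (leqnn k) => [|K IH] k hkK hk.
  have := h k hk; rewrite !mulrBr !mulr1 !coefB !coefMXn.
  have hkj : (k < j)%N by lia.
  by rewrite hkj !subr0.
have := h k hk; rewrite !mulrBr !mulr1 !coefB !coefMXn.
case: ltnP => hkj; first by rewrite !subr0.
rewrite (IH (k - j)%N); [ by move/addIr | lia | lia ].
Qed.

Definition negp (z : int) : nat := if z < 0 then absz z else 0%N.
Definition posp (z : int) : nat := if 0 < z then absz z else 0%N.

Definition Lam (g : nat -> int) (N : nat) : {poly int} :=
  \prod_(1 <= j < N.+1 | g j < 0) (1 - 'X^j) ^+ `|g j|%N.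
Definition Pi (g : nat -> int) (N : nat) : {poly int} :=
  \prod_(1 <= j < N.+1 | 0 < g j) (1 - 'X^j) ^+ `|g j|%N.
Definition hasexp (F : {poly int}) g N :=
  forall k, (k <= N)%N -> (F * Lam g N)`_k = (Pi g N)`_k.

Lemma LamE g N : Lam g N = \prod_(1 <= j < N.+1) (1 - 'X^j) ^+ negp (g j).
Proof. by rewrite /Lam big_mkcond /=; apply: eq_bigr => j _; rewrite /negp; case: ifP. Qed.
Lemma PiE g N : Pi g N = \prod_(1 <= j < N.+1) (1 - 'X^j) ^+ posp (g j).
Proof. by rewrite /Pi big_mkcond /=; apply: eq_bigr => j _; rewrite /posp; case: ifP. Qed.

Lemma hasexp_ext F g h N : (forall k, g k = h k) -> hasexp F g N -> hasexp F h N.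
Proof.
move=> hgh H k hk; have := H k hk.
have -> : Lam g N = Lam h N by rewrite !LamE; apply: eq_bigr => j _; rewrite hgh.
by have -> : Pi g N = Pi h N by rewrite !PiE; apply: eq_bigr => j _; rewrite hgh.
Qed.

End Poly.
Section Trans.
Local Open Scope ring_scope.

Definition gd (g : nat -> int) (j : nat) := fun k => g k + (k == j)%:R.

Lemma prodD1 (h : nat -> {poly int}) N j : (1 <= j <= N)%N ->
  \prod_(1 <= k < N.+1) h k = h j * \prod_(1 <= k < N.+1 | k != j) h k.
Proof. by move=> hj; rewrite (bigD1_seq j) ?iota_uniq // mem_index_iota ltnS. Qed.

Lemma rest_gd (p : int -> nat) g N j :
  \prod_(1 <= k < N.+1 | k != j) (1 - 'X^k) ^+ p (gd g j k) =
  \prod_(1 <= k < N.+1 | k != j) (1 - 'X^k) ^+ p (g k) :> {poly int}.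
Proof. by apply: eq_bigr => k /negbTE hk; rewrite /gd hk addr0. Qed.

Lemma gd_cases (z : int) :
  (negp z = (negp (z + 1)).+1 /\ posp (z + 1) = posp z) \/
  (negp (z + 1) = negp z /\ posp (z + 1) = (posp z).+1).
Proof.
rewrite /negp /posp; case: (ltrP z 0) => hz.
  by left; do ![case: ifPn => ?]; lia.
by right; do ![case: ifPn => ?]; lia.
Qed.

Lemma far_gd g N j : (N < j)%N -> Lam (gd g j) N = Lam g N /\ Pi (gd g j) N = Pi g N.
Proof.
move=> hj; rewrite !LamE !PiE; split; apply: eq_big_nat => k hk; rewrite /gd;
  (have -> : (k == j) = false by apply/negbTE; lia); by rewrite addr0.
Qed.

Lemma T1 F g N j : (0 < j)%N -> hasexp F g N -> hasexp (F * (1 - 'X^j)) (gd g j) N.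
Proof.
move=> hj H; rewrite /hasexp.
case: (leqP j N) => hjN; last first.
  have [-> ->] := far_gd g hjN => k hk; rewrite -H // mulrAC.
  by have := eqmMl (F * Lam g N) (eqm_big hjN) hk; rewrite mulr1.
have hjr : (1 <= j <= N)%N by rewrite hj.
move: H; rewrite /hasexp !LamE !PiE !(prodD1 _ hjr) !rest_gd /gd eqxx.
set L0 := \prod_(1 <= k < N.+1 | k != j) _; set P0 := \prod_(1 <= k < N.+1 | k != j) _.
case: (gd_cases (g j)) => [[-> ->]|[-> ->]] H k hk.
  rewrite -H // exprS.
  suff -> : F * (1 - 'X^j) * ((1 - 'X^j) ^+ negp (g j + 1) * L0) =
    F * ((1 - 'X^j) * (1 - 'X^j) ^+ negp (g j + 1) * L0) by [].
  ring.
rewrite exprS; have -> : F * (1 - 'X^j) * ((1 - 'X^j) ^+ negp (g j) * L0) =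
  (F * ((1 - 'X^j) ^+ negp (g j) * L0)) * (1 - 'X^j) by ring.
have -> : (1 - 'X^j) * (1 - 'X^j) ^+ posp (g j) * P0 =
  ((1 - 'X^j) ^+ posp (g j) * P0) * (1 - 'X^j) by ring.
by apply: (eqmM _ H).
Qed.

Lemma T2 F g N j : (0 < j)%N -> hasexp (F * (1 - 'X^j)) (gd g j) N -> hasexp F g N.
Proof.
move=> hj H; rewrite /hasexp.
case: (leqP j N) => hjN; last first.
  move: H; rewrite /hasexp; have [-> ->] := far_gd g hjN => H k hk; rewrite -H // mulrAC.
  by have := eqmMl (F * Lam g N) (eqm_big hjN) hk; rewrite mulr1.
have hjr : (1 <= j <= N)%N by rewrite hj.
move: H; rewrite /hasexp !LamE !PiE !(prodD1 _ hjr) !rest_gd /gd eqxx.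
set L0 := \prod_(1 <= k < N.+1 | k != j) _; set P0 := \prod_(1 <= k < N.+1 | k != j) _.
case: (gd_cases (g j)) => [[-> ->]|[-> ->]] H k hk.
  rewrite -H // exprS.
  suff -> : F * (1 - 'X^j) * ((1 - 'X^j) ^+ negp (g j + 1) * L0) =
    F * ((1 - 'X^j) * (1 - 'X^j) ^+ negp (g j + 1) * L0) by [].
  ring.
apply: (cancel_fac hj) hk => i hi; move: (H i hi); rewrite exprS.
have -> : F * (1 - 'X^j) * ((1 - 'X^j) ^+ negp (g j) * L0) =
  (F * ((1 - 'X^j) ^+ negp (g j) * L0)) * (1 - 'X^j) by ring.
have -> : (1 - 'X^j) * (1 - 'X^j) ^+ posp (g j) * P0 =
  ((1 - 'X^j) ^+ posp (g j) * P0) * (1 - 'X^j) by ring.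
by [].
Qed.
End Trans.
Section Step.
Local Open Scope ring_scope.

Lemma prod_coef0 (m : nat) (h : nat -> nat) :
  (\prod_(1 <= j < m.+1) (1 - 'X^j) ^+ h j : {poly int})`_0 = 1.
Proof.
rewrite big_nat_cond; apply: (big_ind (fun p : {poly int} => p`_0 = 1)).
- by rewrite coef1.
- by move=> p q hp hq; rewrite coef0M hp hq mulr1.
by move=> j /andP [/andP [hj _] _]; apply: coef0_fac.
Qed.

Lemma Lam0 g m : (Lam g m)`_0 = 1. Proof. by rewrite LamE prod_coef0. Qed.
Lemma Pi0 g m : (Pi g m)`_0 = 1. Proof. by rewrite PiE prod_coef0. Qed.

Lemma posneg (z : int) : (posp z)%:R - (negp z)%:R = z.
Proof. by rewrite /negp /posp; do ![case: ifPn => ?]; lia. Qed.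

Lemma step F g n : hasexp F g n -> F`_0 = 1 -> (0 < n)%N ->
  g n = (Pi g n.-1)`_n - (F * Lam g n.-1)`_n.
Proof.
case: n => [|m] // H F0 _; have := H m.+1 (leqnn _) => /=.
rewrite LamE PiE (big_nat_recr m.+1) // (big_nat_recr m.+1) //= -LamE -PiE mulrA !coef_fac_n //.
rewrite coef0M F0 Lam0 Pi0 !mulr1 => E.
rewrite -(posneg (g m.+1)); move: E.
move: ((posp (g m.+1))%:R : int) ((negp (g m.+1))%:R : int) => b a.
move: ((Pi g m)`_m.+1) ((F * Lam g m)`_m.+1) => P Q; lia.
Qed.

Lemma T1_list F g N (l : seq nat) : all (fun x => 0 < x)%N l -> hasexp F g N ->
  hasexp (F * \prod_(x <- l) (1 - 'X^x)) (fun k => g k + (count_mem k l)%:R) N.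
Proof.
elim: l F g => [|x l IH] F g /=.
  by move=> _ H; rewrite big_nil mulr1; apply: hasexp_ext H => k; rewrite addr0.
move=> /andP [hx hl] H; rewrite big_cons mulrA.
apply: hasexp_ext (IH _ _ hl (T1 hx H)) => k.
by rewrite /gd natrD addrA eq_sym.
Qed.
End Step.
Section UPoly.
Variable A : seq nat.
Hypothesis hmin : min_gens A.
Local Notation e := (size A).
Local Notation n i := (nth 0%N A i).
Local Notation UU := (fun s => U A s).
Local Open Scope ring_scope.

Lemma sum_nz (k : nat) (F : 'I_k.+1 -> int) : \sum_(i < k.+1) F i != 0 -> exists i, F i != 0.
Proof.
move=> h; apply: NNPP => hn; move/negP: h; apply; rewrite big1 // => i _.
by apply/eqP; apply: NNPP => h; apply: hn; exists i; apply/negP.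
Qed.

Definition oneU N (p : {poly int}) :=
  p`_0 = 1 /\ forall k, (0 < k <= N)%N -> p`_k != 0 -> U A k.

Lemma oneU1 N : oneU N 1.
Proof. by split; [rewrite coef1 | move=> k /andP [hk _]; rewrite coef1; case: k hk]. Qed.

Lemma oneU_mul N p q : oneU N p -> oneU N q -> oneU N (p * q).
Proof.
move=> [p0 hp] [q0 hq]; split; first by rewrite coef0M p0 q0 mulr1.
move=> k hk; rewrite coefM => /sum_nz [i]; rewrite mulf_eq0 negb_or => /andP [pi qi].
have hi := ltn_ord i.
case: (posnP i) => [i0|ip].
  by move: qi; rewrite i0 subn0; apply: hq.
case: (ltnP i k) => [ik|ki]; last first.
  have ei : (i : nat) = k by lia.
  by rewrite -ei; apply: hp pi; rewrite ei.
have h1 : U A i by apply: hp pi; lia.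
have h2 : U A (k - i) by apply: hq qi; lia.
by have := U_UU hmin h1 h2; rewrite subnKC // ltnW.
Qed.

Definition multp (j : nat) (p : {poly int}) := forall k, p`_k != 0 -> (j %| k)%N.

Lemma multp_mul j p q : multp j p -> multp j q -> multp j (p * q).
Proof.
move=> hp hq k; rewrite coefM => /sum_nz [i]; rewrite mulf_eq0 negb_or => /andP [pi qi].
have := hp _ pi; have := hq _ qi; have hi := ltn_ord i.
by move=> h1 h2; rewrite -(subnK (ltnSE hi)) dvdn_add.
Qed.

Lemma multp_fac j a : multp j ((1 - 'X^j) ^+ a).
Proof.
elim: a => [|a IH]; first by move=> k; rewrite expr0 coef1; case: k.
rewrite exprS; apply: multp_mul IH => k; rewrite coefB coef1 coefXn.
by case: (k =P j) => [->|_]; case: k => //=; rewrite subr0.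
Qed.

Lemma oneU_fac N j a : U A j -> oneU N ((1 - 'X^j) ^+ a).
Proof.
move=> hj; have j2 := U_ge2 hmin hj; split; first by apply: coef0_fac; lia.
move=> k /andP [hk _] /(multp_fac) /dvdnP [c hc].
rewrite hc; apply: U_mul => //; move: hk; rewrite hc; case: c {hc} => //.
Qed.

Lemma oneU_add N m p q : oneU N p -> oneU N q -> minimalS A UU m -> (0 < m <= N)%N ->
  (p * q)`_m = p`_m + q`_m.
Proof.
move=> [p0 hp] [q0 hq] [hm hmin'] hmN.
case: m hm hmin' hmN => [|m] // hm hmin' hmN.
rewrite coefM big_ord_recl big_ord_recr big1 => [|i _].
  by rewrite lift0 /= subn0 subnn p0 q0 mul1r mulr1 add0r addrC.
rewrite lift0 (_ : (widen_ord (leqnSn m) i : nat) = i) //.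
have hi := ltn_ord i.
apply/eqP; apply: NNPP => /negP; rewrite mulf_eq0 negb_or => /andP [pi qi].
have Ui : U A i.+1 by apply: hp pi; lia.
have Uk : U A (m.+1 - i.+1) by apply: hq qi; lia.
have hle : leS A i.+1 m.+1 by rewrite /leS (U_inS Uk) andbT; lia.
by have := hmin' _ Ui hle; lia.
Qed.

Lemma fac_zero m j a : U A j -> (j < m)%N -> minimalS A UU m -> ((1 - 'X^j) ^+ a : {poly int})`_m = 0.
Proof.
move=> hj hjm [hm hmin']; apply/eqP; apply: NNPP => /negP /(multp_fac) /dvdnP [c hc].
have hc2 : (1 < c)%N by move: hjm; rewrite hc; case: c {hc} => [|[|c]] //=; rewrite mul1n ltnn.
have hle : leS A j m.
  rewrite /leS hc leq_pmull ?(ltnW hc2) //=.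
  have -> : (c * j - j = c.-1 * j)%N by case: (c) hc2 => // c' _; rewrite mulSn addKn.
  by apply: U_inS; apply: U_mul => //; lia.
by have := hmin' _ hj hle; lia.
Qed.
End UPoly.
Section KPoly.
Variable A : seq nat.
Hypothesis hmin : min_gens A.
Local Notation e := (size A).
Local Notation n i := (nth 0%N A i).
Local Notation UU := (fun s => U A s).
Local Open Scope ring_scope.

Definition PA : {poly int} := \prod_(x <- A) (1 - 'X^x).
Definition Dp (N : nat) : {poly int} := \prod_(i < e) \sum_(c < N.+1) 'X^(c * n i).

Lemma inA_pos x : x \in A -> (0 < x)%N.
Proof.
move=> hx; have hi : (index x A < e)%N by rewrite index_mem.
by have := gens_pos hmin (Ordinal hi); rewrite /= nth_index.
Qed.

Lemma inA_inS x : x \in A -> inS A x.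
Proof.
move=> hx; have hi : (index x A < e)%N by rewrite index_mem.
by have := inS_gen hmin (Ordinal hi); rewrite /= nth_index.
Qed.

Lemma card_fv N s : (s <= N)%N ->
  #|[set f : fact_vec A N | phiv f == s]| = dnum A s.
Proof.
move=> hs; have hle : (s.+1 <= N.+1)%N by [].
pose w (v : fact_vec A s) : fact_vec A N := [ffun i => widen_ord hle (v i)].
have winj : injective w.
  move=> v1 v2 h; apply/ffunP => i; apply/val_inj.
  by have := congr1 (fun f : fact_vec A N => nat_of_ord (f i)) h; rewrite /w !ffunE.
rewrite /dnum -(card_imset _ winj); apply: eq_card => f; rewrite inE.
apply/idP/imsetP => [hf|[v hv ->]].
  have hf' : \sum_(k < e) (f k : nat) * n k = s by apply/eqP.
  have [v hv ev] := exZ hmin hf'; exists v => //.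
  by apply/ffunP => i; apply/val_inj; rewrite /w ffunE /= ev.
move: hv; rewrite inE /phiv => /eqP hv; apply/eqP; apply: eq_trans hv.
by apply: eq_bigr => i _; rewrite /w ffunE.
Qed.

Lemma D_coef N s : (s <= N)%N -> (Dp N)`_s = (dnum A s)%:R.
Proof.
move=> hs; rewrite /Dp bigA_distr_bigA /= coef_sum -(card_fv hs).
under eq_bigr => f _ do rewrite prodrXr coefXn.
rewrite -sum1_card natr_sum [RHS]big_mkcond /=; apply: eq_bigr => f _.
by rewrite inE /phiv eq_sym; case: eqP.
Qed.

Lemma geom (M a : nat) : (\sum_(c < M) 'X^(c * a)) * (1 - 'X^a) = 1 - 'X^(M * a) :> {poly int}.
Proof.
elim: M => [|M IH]; first by rewrite big_ord0 mul0r mul0n expr0 subrr.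
rewrite big_ord_recr /= mulrDl IH mulSn addnC exprD; ring.
Qed.

Lemma PA_nth : PA = \prod_(i < e) (1 - 'X^(n i)).
Proof. by rewrite /PA (big_nth 0%N) big_mkord. Qed.

Lemma eqm1_mul N p q : eqm N p 1 -> eqm N q 1 -> eqm N (p * q) 1.
Proof.
move=> hp hq; apply: eqm_trans (eqmM q hp) _; rewrite mul1r; exact: hq.
Qed.

Lemma DPA N : eqm N (Dp N * PA) 1.
Proof.
rewrite PA_nth /Dp -big_split /=.
apply: (big_ind (fun p => eqm N p 1)) => //; first exact: eqm1_mul.
move=> i _; rewrite geom; apply: eqm_big.
have := gens_pos hmin i; nia.
Qed.

Lemma H_coef N s : (s <= N)%N -> (hilb_trunc A N)`_s = (inS A s)%:R.
Proof.
move=> hs; rewrite /hilb_trunc coef_sum big_mkcond /=.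
rewrite (bigD1_seq s) ?iota_uniq ?mem_index_iota //= coefXn eqxx big1 ?addr0.
  by case: (inS A s).
by move=> t /negbTE ht; rewrite coefXn eq_sym ht; case: (inS A t).
Qed.

Lemma PA_S k : PA`_k != 0 -> inS A k.
Proof.
rewrite /PA big_seq; move: k; apply: (big_ind (fun p : {poly int} => forall k, p`_k != 0 -> inS A k)).
- by move=> k; rewrite coef1; case: k => // _; apply: inS0.
- move=> p q hp hq k; rewrite coefM => /sum_nz [i]; rewrite mulf_eq0 negb_or => /andP [pi qi].
  have := inS_add hmin (hp _ pi) (hq _ qi); rewrite subnKC //; exact: ltnSE (ltn_ord i).
move=> x hx k; rewrite coefB coef1 coefXn.
case: (k =P x) => [->|_]; first by rewrite inA_inS.
by case: k => // _; apply: inS0.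
Qed.

Lemma PA0 : PA`_0 = 1.
Proof.
rewrite /PA big_seq; apply: (big_ind (fun p : {poly int} => p`_0 = 1)).
- by rewrite coef1.
- by move=> p q hp hq; rewrite coef0M hp hq mulr1.
by move=> x hx; rewrite -(expr1 (1 - 'X^x)) coef0_fac // inA_pos.
Qed.

Definition Yp N := hilb_trunc A N - Dp N.

Lemma Y_coef N s : (s <= N)%N -> (Yp N)`_s = (inS A s)%:R - (dnum A s)%:R.
Proof. by move=> hs; rewrite coefB H_coef // D_coef. Qed.

Lemma Y_U N s : (s <= N)%N -> (Yp N)`_s != 0 -> U A s.
Proof.
move=> hs; rewrite Y_coef //; case hS: (inS A s).
  move: hS; rewrite /inS -card_gt0 /U /dnum; case: #|Z A s| => [|[|d]] //.
move: hS; rewrite /inS => /negbFE /eqP hZ; by rewrite /dnum hZ cards0 subrr eqxx.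
Qed.

Lemma K_split N : eqm N (hilb_trunc A N * PA) (1 + Yp N * PA).
Proof.
have -> : hilb_trunc A N * PA = Dp N * PA + Yp N * PA by rewrite /Yp; ring.
move=> k hk; rewrite !coefD DPA //.
Qed.

Lemma K_oneU N : oneU A N (hilb_trunc A N * PA).
Proof.
split; first by rewrite coef0M H_coef // (inS0 hmin) PA0 mulr1.
move=> k /andP [k0 kN]; rewrite K_split // coefD coef1.
rewrite (_ : (k == 0)%N = false); last by apply/negbTE; rewrite -lt0n.
rewrite add0r coefM => /sum_nz [i]; rewrite mulf_eq0 negb_or => /andP [yi pi].
have hi := ltn_ord i.
have Ui := Y_U (leq_trans (ltnSE hi) kN) yi.
have := U_add hmin Ui (PA_S pi); rewrite subnKC //; exact: ltnSE hi.
Qed.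

Lemma K_min N m : minimalS A UU m -> (0 < m <= N)%N ->
  (hilb_trunc A N * PA)`_m = 1 - (dnum A m)%:R.
Proof.
move=> [hm hmin'] /andP [m0 mN]; rewrite K_split // coefD coef1.
rewrite (_ : (m == 0)%N = false); last by apply/negbTE; rewrite -lt0n.
rewrite add0r coefM big_ord_recr /= subnn PA0 mulr1 Y_coef // (U_inS hm).
rewrite big1 ?add0r // => i _.
have hi := ltn_ord i.
apply/eqP; apply: NNPP => /negP; rewrite mulf_eq0 negb_or => /andP [yi pi].
have Ui := Y_U (leq_trans (ltnW hi) mN) yi.
have hle : leS A i m by rewrite /leS (PA_S pi) andbT /=; lia.
by have := hmin' _ Ui hle; lia.
Qed.
End KPoly.
Section Final.
Variable A : seq nat.
Hypothesis hmin : min_gens A.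
Variable ex : nat -> int.
Hypothesis hex : cyclotomic_exponents A ex.
Local Notation UU := (fun s => U A s).
Local Open Scope ring_scope.

Definition fx (k : nat) : int := ex k - (k == 1%N)%:R + (count_mem k A)%:R.

Lemma hasK N : hasexp (hilb_trunc A N * PA A) fx N.
Proof.
have H1 : hasexp ((1 - 'X) * hilb_trunc A N) ex N := hex (m := N).
have hpos : all (fun x => 0 < x)%N A by apply/allP => x; apply: inA_pos.
have H2 := T1_list hpos H1.
have H3 : hasexp (hilb_trunc A N * PA A * (1 - 'X^1)) (gd fx 1) N.
  have -> : hilb_trunc A N * PA A * (1 - 'X^1) =
      (1 - 'X) * hilb_trunc A N * \prod_(x <- A) (1 - 'X^x) by rewrite /PA expr1; ring.
  by apply: hasexp_ext H2 => k; rewrite /gd /fx; ring.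
exact: T2 _ H3.
Qed.

Lemma K0 N : (hilb_trunc A N * PA A)`_0 = 1.
Proof. by have [h _] := K_oneU hmin N. Qed.

Lemma prodU g M N : (forall i, (0 < i <= M)%N -> g i != 0 -> U A i) ->
  oneU A N (Lam g M) /\ oneU A N (Pi g M).
Proof.
move=> hU; split; [rewrite /Lam | rewrite /Pi]; rewrite big_nat_cond;
  apply: (big_ind (oneU A N)).
- exact: oneU1.
- by move=> p q; apply: oneU_mul.
- move=> i /andP [/andP [i1 iM] gi]; apply: (oneU_fac hmin); apply: hU.
    by rewrite i1; rewrite ltnS in iM.
  exact: ltr0_neq0.
- exact: oneU1.
- by move=> p q; apply: oneU_mul.
move=> i /andP [/andP [i1 iM] gi]; apply: (oneU_fac hmin); apply: hU.
  by rewrite i1; rewrite ltnS in iM.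
by rewrite gt_eqF.
Qed.

Lemma prodU0 g M m : minimalS A UU m -> (M < m)%N ->
  (forall i, (0 < i <= M)%N -> g i != 0 -> U A i) ->
  (Lam g M)`_m = 0 /\ (Pi g M)`_m = 0.
Proof.
move=> hm hMm hU; have m0 : (0 < m)%N by lia.
have key : forall (P : pred nat) (h : nat -> nat),
    (forall i, (0 < i <= M)%N -> P i -> U A i) ->
    oneU A m (\prod_(1 <= i < M.+1 | P i) (1 - 'X^i) ^+ h i) /\
    (\prod_(1 <= i < M.+1 | P i) (1 - 'X^i) ^+ h i : {poly int})`_m = 0.
  move=> P h hP; rewrite big_nat_cond.
  apply: (big_ind (fun p => oneU A m p /\ p`_m = 0)).
  - by split; [apply: oneU1 | rewrite coef1; case: m m0 {hm hMm}].
  - move=> p q [hp p0] [hq q0] /=; split; first by have H := oneU_mul hmin hp hq; exact: H.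
    by rewrite (oneU_add hp hq hm) ?p0 ?q0 ?addr0 // m0 leqnn.
  move=> i /andP [/andP [i1 iM] Pi]; have Ui : U A i by apply: hP => //; lia.
  split; first exact: oneU_fac.
  by apply: (fac_zero hmin) Ui _ hm; lia.
split.
  apply: (proj2 (key (fun i => g i < 0) (fun i => `|g i|%N) _)) => i hi gi; apply: hU => //.
  exact: ltr0_neq0.
apply: (proj2 (key (fun i => 0 < g i) (fun i => `|g i|%N) _)) => i hi gi; apply: hU => //.
by rewrite gt_eqF.
Qed.

Lemma Q1 j : (0 < j)%N -> ~~ U A j -> fx j = 0.
Proof.
elim: j {-2}j (leqnn j) => [|J IH] j hjJ hj hU; first lia.
have hs := step (hasK (N:=j)) (K0 j) hj.
have hyp : forall i, (0 < i <= j.-1)%N -> fx i != 0 -> U A i.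
  move=> i hi; apply: contraR => hUi; apply/eqP; apply: IH hUi; lia.
have [[_ hL] [_ hP]] := prodU j hyp.
have jj : (0 < j <= j)%N by rewrite hj leqnn.
have e1 : (Pi fx j.-1)`_j = 0 by apply: NNPP => /eqP /(hP _ jj); apply/negP.
have [_ hK] := K_oneU hmin j.
have hKL := oneU_mul hmin (K_oneU hmin j) (proj1 (prodU j hyp)).
have e2 : (hilb_trunc A j * PA A * Lam fx j.-1)`_j = 0.
  by apply: NNPP => /eqP /(hKL.2 _ jj); apply/negP.
by rewrite hs e1 e2 subr0.
Qed.

Lemma Q1' i : (0 < i)%N -> fx i != 0 -> U A i.
Proof. by move=> hi; apply: contraR => hU; apply/eqP; apply: Q1. Qed.

Lemma Q2 m : minimalS A UU m -> fx m = (dnum A m)%:R - 1.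
Proof.
move=> hm; have m2 := U_ge2 hmin hm.1; have m0 : (0 < m)%N by lia.
have hs := step (hasK (N:=m)) (K0 m) m0.
have hyp : forall i, (0 < i <= m.-1)%N -> fx i != 0 -> U A i.
  by move=> i /andP [hi _]; apply: Q1'.
have hmm : (m.-1 < m)%N by lia.
have [e1 e2] := prodU0 hm hmm hyp.
have [hL _] := prodU m hyp.
have mm : (0 < m <= m)%N by rewrite m0 leqnn.
rewrite hs e2 (oneU_add (K_oneU hmin m) hL hm mm) e1 addr0 (K_min hmin hm mm).
by rewrite opprB add0r.
Qed.

Lemma fx_ex j : j != 1%N -> j \notin A -> fx j = ex j.
Proof.
move=> h1 hA; rewrite /fx (negbTE h1) subr0.
by move/count_memPn: hA => ->; rewrite addr0.
Qed.

Lemma E_U j : Eset A ex j -> U A j.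
Proof.
move=> [j2 [hex0 hnA]]; apply: Q1'; first lia.
by rewrite fx_ex //; [apply/eqP | apply/eqP => h; move: j2; rewrite h].
Qed.

Lemma minU_ex m : minimalS A UU m -> ex m = (dnum A m)%:R - 1.
Proof.
move=> hm; have m2 := U_ge2 hmin hm.1.
have h1 : m != 1%N by apply/eqP => h; move: m2; rewrite h.
have h2 : m \notin A by apply: (U_notin hmin); exact: hm.1.
by rewrite -(fx_ex h1 h2) Q2.
Qed.

Lemma minU_E m : minimalS A UU m -> Eset A ex m.
Proof.
move=> hm; have m2 := U_ge2 hmin hm.1.
have h2 : m \notin A by apply: (U_notin hmin); exact: hm.1.
split => //; split => //.
rewrite minU_ex //; have := hm.1; rewrite /U; case: (dnum A m) => [|[|d]] //= _.
by apply/eqP; rewrite subr_eq0 pnatr_eq1.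
Qed.

Lemma minE_iff d : minimalS A (Eset A ex) d <-> minimalS A UU d.
Proof.
split.
  move=> [hE hm]; split; first exact: E_U.
  move=> y hy hyd; have [u [hmu hud]] := exists_min hmin hy.
  have hu : u = d by apply: hm; [exact: minU_E | apply: (leS_trans hmin hud hyd)].
  by apply: (leS_anti hyd); rewrite -hu.
move=> hmd; split; first exact: minU_E.
by move=> y hy hyd; apply: hmd.2 => //; apply: E_U.
Qed.
End Final.

Theorem theorem5p3 (A : seq nat) (hA : numerical_semigroup_mingens A)
    (ex : nat -> int) (hex : cyclotomic_exponents A ex) :
  (forall d : nat, minimalS A (Betti A) d <-> minimalS A (Eset A ex) d) /\
  (forall alpha : nat, minimalS A (Eset A ex) alpha ->
     ex alpha = ((dnum A alpha)%:Z - 1)%R /\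
     ex alpha = ((inum A alpha)%:Z - 1)%R).
Proof.
have hmin := hA.1; split.
  move=> d; rewrite (minBetti_iff hmin) (minE_iff hmin hex); done.
move=> alpha /(minE_iff hmin hex) hm.
rewrite (minU_inum hmin hm) (minU_ex hmin hex hm) natz; by split.
Qed.
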